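(* Let $A_1,\dots,A_m$ be invertible real $n\times n$ matrices and $B_1,\dots,B_m$ real matrices with $n$ rows, not all zero. Let $V_0=\{0\}$, $V_1=\sum_{i=1}^m\mathrm{Im}(B_i)$ and $V_{k+1}=V_k+\sum_{i=1}^mA_iV_k$ for $k\ge1$. Let $\pi\in\Sigma^*$ and let $k\ge1$ be such that $\dim V_{k-1}\le\dim\mathcal{R}(\pi)<\dim V_k$. Then there exists a word $\pi_0$ of length at most $k$ such that $\dim\mathcal{R}(\pi_0\pi)>\dim\mathcal{R}(\pi)$.
   Context: $\Sigma=\{1,\dots,m\}$, $\Sigma^*$ is the set of finite words over $\Sigma$, $\pi_0\pi$ denotes concatenation. For $\pi=i_1\cdots i_k$, $\mathcal{R}(\pi)=\mathrm{Im}(A_{i_k}\cdots A_{i_2}B_{i_1},\dots,A_{i_k}B_{i_{k-1}},B_{i_k})$ is the reachable space from the origin at time $k$ of the switched system $x_k=A_{i_k}x_{k-1}+B_{i_k}u_k$ with switching sequence $\pi$ (and $\mathcal{R}$ of the empty word is $\{0\}$). $A_iV$ is the image of subspace $V$ under $A_i$. *)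

(* Defs.v *)
From HB Require Import structures.
From mathcomp Require Import all_boot all_order all_algebra.
From mathcomp Require Export reals.
Set Implicit Arguments. Unset Strict Implicit. Unset Printing Implicit Defensive.
Import GRing.Theory Num.Theory.
Local Open Scope ring_scope.

(* Convention: a subspace of R^n is represented, as in mxalgebra, by the row
   space of a matrix with n columns.  Hence the column space Im(M) of a matrix
   M with n rows is the row space of M^T, and the image A V of a subspace V
   (row space of a matrix V) under A is the row space of V *m A^T. *)

Section Defs.
Variables (R : fieldType) (n m : nat) (p : 'I_m -> nat).
Variables (A : 'I_m -> 'M[R]_n) (B : forall i : 'I_m, 'M[R]_(n, p i)).

(* Reachable space R(pi) for a word pi = i_1 ... i_k (a list [:: i_1; ...; i_k]):
   R([::]) = {0},  R(pi i) = A_i R(pi) + Im(B_i). *)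
Definition reach (pi : seq 'I_m) : 'M[R]_n :=
  foldl (fun V i => (V *m (A i)^T + (B i)^T)%MS) 0 pi.

Fixpoint Vsp (k : nat) : 'M[R]_n :=
  match k with
  | 0 => 0
  | 1 => (\sum_(i < m) <<(B i)^T>>)%MS
  | k'.+1 => (Vsp k' + \sum_(i < m) <<Vsp k' *m (A i)^T>>)%MS
  end.
End Defs.

(* Main.v *)
Require Import Defs.
From HB Require Import structures.
From mathcomp Require Import all_boot all_order all_algebra.
From mathcomp Require Import reals.
From Stdlib Require Import Classical.
Import GRing.Theory Num.Theory.
Local Open Scope ring_scope.

Section Aux.
Variables (R : fieldType) (n m : nat) (p : 'I_m -> nat).
Variables (A : 'I_m -> 'M[R]_n) (B : forall i : 'I_m, 'M[R]_(n, p i)).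

Let f := (fun (V : 'M[R]_n) i => (V *m (A i)^T + (B i)^T)%MS).

Lemma fold_mono (pi : seq 'I_m) (V1 V2 : 'M[R]_n) :
  (V1 <= V2)%MS -> (foldl f V1 pi <= foldl f V2 pi)%MS.
Proof.
elim: pi V1 V2 => [//|i pi IH] V1 V2 H /=.
apply: IH; rewrite /f addsmxS // ?submx_refl //; exact: submxMr.
Qed.

Definition Mp (pi : seq 'I_m) : 'M[R]_n := foldr (fun i M => (A i)^T *m M) 1%:M pi.

Lemma fold_Mp (pi : seq 'I_m) (V : 'M[R]_n) : (V *m Mp pi <= foldl f V pi)%MS.
Proof.
elim: pi V => [|i pi IH] V /=; first by rewrite mulmx1.
apply: submx_trans (IH _).
rewrite mulmxA; apply: submxMr; exact: addsmxSl.
Qed.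

Lemma Mp_unit (pi : seq 'I_m) : (forall i, A i \in unitmx) -> row_free (Mp pi).
Proof.
move=> HA; elim: pi => [|i pi IH] /=; first by rewrite row_free_unit unitmx1.
by rewrite /row_free mxrankMfree // -/(row_free _) row_free_unit unitmx_tr HA.
Qed.

Lemma Vsp_sub (k : nat) : forall (M W : 'M[R]_n),
  (forall pi0, (size pi0 <= k)%N -> (reach A B pi0 *m M <= W)%MS) ->
  (Vsp A B k *m M <= W)%MS.
Proof.
elim: k => [|k IH] M W H; first by rewrite /= mul0mx sub0mx.
case: k IH H => [|k] IH H.
  rewrite /= sumsmxMr.
  apply/sumsmx_subP => i _.
  apply: submx_trans (H [:: i] isT); apply: submxMr.
  rewrite genmxE /reach /=; exact: addsmxSr.
have -> : Vsp A B k.+2 = (Vsp A B k.+1 + \sum_(i < m) <<Vsp A B k.+1 *m (A i)^T>>)%MS by [].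
rewrite addsmxMr.
rewrite addsmx_sub; apply/andP; split.
  by apply: IH => pi0 Hs; apply: H; apply: leqW.
rewrite sumsmxMr.
apply/sumsmx_subP => i _.
rewrite (eqmxMr _ (genmxE _)) -mulmxA; apply: IH => pi0 Hs.
apply: submx_trans (H (rcons pi0 i) _); last by rewrite size_rcons.
rewrite mulmxA; apply: submxMr.
rewrite /reach -cats1 foldl_cat /=; exact: addsmxSl.
Qed.

End Aux.

Theorem lemma4 (R : realType) (n m : nat) (p : 'I_m -> nat)
  (A : 'I_m -> 'M[R]_n) (B : forall i : 'I_m, 'M[R]_(n, p i)) :
  (forall i, A i \in unitmx) ->
  (exists i, B i != 0) ->
  forall (pi : seq 'I_m) (k : nat), (1 <= k)%N ->
  (\rank (Vsp A B k.-1) <= \rank (reach A B pi) < \rank (Vsp A B k))%N ->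
  exists pi0 : seq 'I_m, (size pi0 <= k)%N /\
    (\rank (reach A B pi) < \rank (reach A B (pi0 ++ pi)))%N.
Proof.
move=> HA _ pi k _ /andP[_ Hlt].
apply: NNPP => Hno.
have Hsub : (Vsp A B k *m @Mp _ _ m A pi <= reach A B pi)%MS.
  apply: Vsp_sub => pi0 Hs.
  have Hle : ~~ (\rank (reach A B pi) < \rank (reach A B (pi0 ++ pi)))%N.
    by apply/negP => Hr; apply: Hno; exists pi0.
  have S1 : (reach A B pi <= reach A B (pi0 ++ pi))%MS.
    rewrite /reach foldl_cat; apply: fold_mono; exact: sub0mx.
  have S2 : (reach A B (pi0 ++ pi) <= reach A B pi)%MS.
    rewrite -(mxrank_leqif_sup S1) eqn_leq (mxrankS S1) /=.
    by rewrite leqNgt.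
  apply: submx_trans S2.
  rewrite /reach foldl_cat; exact: fold_Mp.
move: (mxrankS Hsub); rewrite mxrankMfree ?Mp_unit //.
by rewrite leqNgt Hlt.
Qed.
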